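(* Let $k\ge 2$ and let $x_0\in\Sigma_k^*$ be any word. Then the sequence $(x_n)_{n\ge 0}$ defined by $x_{n+1}=\mathcal P_k(x_n)$ is eventually periodic: there exist integers $N\ge 0$ and $p\ge 1$ such that $x_{n+p}=x_n$ for all $n\ge N$. In particular, the sequence eventually enters a fixed point ($p=1$) or a cycle.
   Context: Fix an integer $k\ge 2$ and the alphabet $\Sigma_k=\{0,1,\dots,k-1\}$. A word is a finite nonempty string of letters of $\Sigma_k$ (leading zeros allowed); $\Sigma_k^*$ denotes the set of words. For a word $x$, $|x|$ denotes its length and $|x|_i$ the number of occurrences of the letter $i$ in $x$. For a positive integer $c$, $[c]_k$ denotes its standard base-$k$ representation without leading zeros, viewed as a word over $\Sigma_k$; it has $\lfloor\log_k c\rfloor+1$ letters. The map $\mathcal P_k:\Sigma_k^*\to\Sigma_k^*$ is defined as follows: if $b_1>b_2>\dots>b_r$ are exactly the letters occurring in $x$ (i.e. those with $|x|_{b_j}\neq 0$), then $\mathcal P_k(x)=[|x|_{b_1}]_k\,b_1\,[|x|_{b_2}]_k\,b_2\cdots[|x|_{b_r}]_k\,b_r$ (concatenation). For example, for $k=10$, $\mathcal P_{10}(123)=131211$. A fixed point is a word $x$ with $\mathcal P_k(x)=x$. *)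

(* Defs.v *)
From mathcomp Require Import all_boot.
Set Implicit Arguments. Unset Strict Implicit. Unset Printing Implicit Defensive.

(* A word over Sigma_k = {0,...,k-1}: a finite nonempty sequence of naturals,
   each < k.  Words are represented as seq nat; first element = leftmost letter. *)
Definition is_word (k : nat) (x : seq nat) : Prop :=
  x <> [::] /\ all (fun a => a < k) x.

(* [c]_k : standard base-k representation of c > 0, most significant digit
   first, with floor(log_k c) + 1 digits (trunc_log k c = floor(log_k c)). *)
Definition base_rep (k c : nat) : seq nat :=
  let L := (trunc_log k c).+1 in
  [seq (c %/ k ^ (L.-1 - i)) %% k | i <- iota 0 L].

(* P_k(x) = [|x|_{b1}]_k b1 [|x|_{b2}]_k b2 ... for the letters
   b1 > b2 > ... > br occurring in x. *)
Definition Pk (k : nat) (x : seq nat) : seq nat :=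
  flatten [seq base_rep k (count_mem b x) ++ [:: b]
          | b <- rev (iota 0 k) & count_mem b x != 0].

(* Main.v *)
Require Import Defs.
From mathcomp Require Import all_boot.
From mathcomp Require Import zify.

Fixpoint words (k n : nat) : seq (seq nat) :=
  if n is n'.+1 then [::] :: [seq a :: w | a <- iota 0 k, w <- words k n']
  else [:: [::]].

Lemma mem_words k n w : size w <= n -> all (fun a => a < k) w -> w \in words k n.
Proof.
elim: n w => [|n IH] [|a w] //=.
move=> Hs /andP [Ha Hw]; rewrite in_cons; apply/orP; right.
apply: (allpairs_f (fun a w => a :: w)); first by rewrite mem_iota.
exact: IH.
Qed.

Lemma size_base_rep k c : size (base_rep k c) = (trunc_log k c).+1.
Proof. by rewrite /base_rep size_map size_iota. Qed.

Lemma all_base_rep k c : 0 < k -> all (fun a => a < k) (base_rep k c).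
Proof. move=> hk; apply/allP => a /mapP [i _ ->]; exact: ltn_pmod. Qed.

Lemma size_flatten_le (T : Type) (s : seq (seq T)) B :
  all (fun w => size w <= B) s -> size (flatten s) <= size s * B.
Proof.
elim: s => [|w s IH] //= /andP [Hw Hs].
rewrite size_cat mulSn; apply: leq_add => //; exact: IH.
Qed.

Lemma Pk_all k x : 0 < k -> all (fun a => a < k) (Pk k x).
Proof.
move=> hk; apply/allP => a /flattenP [w /mapP [b Hb ->]].
rewrite mem_cat => /orP [Ha|].
  by move/allP: (all_base_rep k (count_mem b x) hk) => /(_ a Ha).
rewrite mem_seq1 => /eqP ->.
by move: Hb; rewrite mem_filter mem_rev mem_iota => /andP [_ /andP [_]].
Qed.

Lemma Pk_size k x e : 1 < k -> size x <= k ^ e ->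
  size (Pk k x) <= k * (e + 2).
Proof.
move=> hk hs; rewrite /Pk.
set s := [seq _ | _ <- _].
apply: (leq_trans (@size_flatten_le _ _ (e + 2) _)).
  apply/allP => w /mapP [b _ ->].
  rewrite size_cat size_base_rep /= addn1 -addn2 leq_add2r.
  rewrite -(trunc_expnK e hk); apply: leq_trunc_log.
  exact: leq_trans (count_size _ _) hs.
rewrite leq_mul2r; apply/orP; right.
by rewrite /s size_map size_filter (leq_trans (count_size _ _)) // size_rev size_iota.
Qed.

Lemma pow_bound k m : 1 < k -> m + 6 <= k ^ (m + 3).
Proof.
move=> hk; elim: m => [|m IH].
  rewrite add0n; apply: (leq_trans (_ : 6 <= 2 ^ 3)) => //.
  by rewrite leq_exp2r.
rewrite addSn expnS.
apply: (leq_trans (_ : (m + 6).+1 <= 2 * (m + 6))); first lia.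
by rewrite leq_mul.
Qed.

Theorem theorem1 (k : nat) (hk : 2 <= k) (x0 : seq nat) (hx0 : is_word k x0) :
  exists (N p : nat), 1 <= p /\
    forall n, N <= n -> iter (n + p) (Pk k) x0 = iter n (Pk k) x0.
Proof.
have k0 : 0 < k by apply: ltnW.
set e := size x0 + 4.
set M := k ^ e.
have HM : k * (e + 2) <= M.
  rewrite /M /e (_ : size x0 + 4 = (size x0 + 3).+1) ?expnS; last by lia.
  rewrite leq_mul2l; apply/orP; right.
  have := @pow_bound k (size x0) hk; lia.
have Hx0 : size x0 <= M.
  rewrite /M /e; apply: (leq_trans (_ : _ <= 2 ^ (size x0 + 4))).
    apply: (leq_trans (ltnW (ltn_expl _ (isT : 1 < 2)))).
    by rewrite leq_exp2l // leq_addr.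
  by rewrite leq_exp2r // addn4.
have inv : forall n, iter n (Pk k) x0 \in words k M.
  have sz : forall n, size (iter n (Pk k) x0) <= M.
    elim=> [|n IH] //=; apply: leq_trans HM; exact: Pk_size.
  move=> n; apply: mem_words; first exact: sz.
  case: n => [|n] /=; [by case: hx0 | exact: Pk_all].
set L := words k M.
set T := size L.
have Hnu : ~~ uniq [seq iter i (Pk k) x0 | i <- iota 0 T.+1].
  apply/negP => Hu.
  suff : size [seq iter i (Pk k) x0 | i <- iota 0 T.+1] <= size L.
    by rewrite size_map size_iota ltnn.
  apply: (uniq_leq_size Hu) => w /mapP [i _ ->]; exact: inv.
have [i [j [lij Heq]]] : exists i j, i < j /\ iter i (Pk k) x0 = iter j (Pk k) x0.
  case: (boolP [exists ij : 'I_T.+1 * 'I_T.+1,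
      (ij.1 < ij.2) && (iter ij.1 (Pk k) x0 == iter ij.2 (Pk k) x0)]).
    case/existsP => [[a b]] /= /andP [lab /eqP ?]; by exists a, b.
  move=> /existsPn Hno; exfalso; move/negP: Hnu; apply.
  rewrite map_inj_in_uniq ?iota_uniq //.
  move=> a b; rewrite !mem_iota /= !add0n => ha hb Hab.
  case: (ltngtP a b) => // hlt.
    by move: (Hno (Ordinal ha, Ordinal hb)); rewrite /= hlt Hab eqxx.
  by move: (Hno (Ordinal hb, Ordinal ha)); rewrite /= hlt Hab eqxx.
exists i, (j - i); split; first by rewrite subn_gt0.
move=> n Hn.
rewrite -(subnK Hn) -addnA (addnC i) subnK ?(ltnW lij) //.
by rewrite iterD -Heq -iterD.
Qed.
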